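(* Assume the standing setting and assumption in the context. Fix $b>r$ with $\mu(r,b]>0$. There exist a constant $C>0$ and an index $N\in\mathbb N$, depending on $d$, $b$ and $\mu$, such that for any interval $(c,h]\subset[b,\infty)$ and any $x\in\mathbb Z^d$ with $|x|_1\ge N$, $$\mathbb E\big[\nu_x(c,h]\big]\ \le\ C\,\mu(c,h].$$
   Context: Setting: $d\ge2$; $\mathcal E^d$ nearest-neighbor edges of $\mathbb Z^d$; $\{\tau_e\}$ i.i.d. non-negative with law $\mu$, distribution function $F$, essential infimum $r$. Standing assumption: $F(r)<p_c(d)$ if $r=0$ and $F(r)<\vec p_c(d)$ if $r>0$ ($p_c(d)$, $\vec p_c(d)$: critical probabilities of Bernoulli bond and oriented bond percolation on $\mathbb Z^d$). $T(\gamma)=\sum_{e\in\gamma}\tau_e$; geodesics are vertex self-avoiding paths minimizing $T$. Fix a deterministic ordering of finite vertex self-avoiding paths; $\pi^{(x)}$ is the first geodesic from $0$ to $x$ in it. $\nu_x(B)=\frac{1}{|\pi^{(x)}|}\#\{e\in\pi^{(x)}:\tau_e\in B\}$. *)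

(* Defs.v *)
From HB Require Import structures.
From mathcomp Require Import all_boot all_order all_algebra.
From mathcomp Require Import all_classical all_reals all_analysis.
Set Implicit Arguments. Unset Strict Implicit. Unset Printing Implicit Defensive.
Import Order.TTheory GRing.Theory Num.Theory.
Local Open Scope classical_set_scope.
Local Open Scope ring_scope.

Definition Vtx (d : nat) := 'rV[int]_d.
(* The edge {x, x + e_i} is indexed by (x, i): a bijection with E^d. *)
Definition Edge (d : nat) := ('rV[int]_d * 'I_d)%type.

Definition unit_vec (d : nat) (i : 'I_d) : 'rV[int]_d := delta_mx 0 i.

Definition l1 (d : nat) (x : 'rV[int]_d) : nat := (\sum_(i < d) absz (x ord0 i))%N.

Definition adjacent (d : nat) (u v : 'rV[int]_d) : bool := l1 (v - u) == 1%N.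

Definition edge_of (d : nat) (u v : 'rV[int]_d) : option (Edge d) :=
  match [pick i : 'I_d | v == u + unit_vec i] with
  | Some i => Some (u, i)
  | None => match [pick i : 'I_d | u == v + unit_vec i] with
            | Some i => Some (v, i)
            | None => None
            end
  end.

Definition path_edges (d : nat) (s : seq 'rV[int]_d) : seq (Edge d) :=
  pmap (fun p => edge_of p.1 p.2) (zip s (behead s)).

Definition nn_path (d : nat) (s : seq 'rV[int]_d) : bool :=
  all (fun p => adjacent p.1 p.2) (zip s (behead s)).

Definition sa_path (d : nat) (u v : 'rV[int]_d) (s : seq 'rV[int]_d) : Prop :=
  [/\ s != [::], head u s = u, last u s = v, nn_path s & uniq s].

Definition passage_time (d : nat) (R : realType) (t : Edge d -> R)
  (s : seq 'rV[int]_d) : R := \sum_(e <- path_edges s) t e.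

Definition geodesic (d : nat) (R : realType) (t : Edge d -> R)
  (u v : 'rV[int]_d) (s : seq 'rV[int]_d) : Prop :=
  sa_path u v s /\
  forall s', sa_path u v s' -> passage_time t s <= passage_time t s'.

Definition path_ordering (d : nat) (ord : rel (seq 'rV[int]_d)) : Prop :=
  [/\ total ord, transitive ord & antisymmetric ord].

Definition first_geodesic (d : nat) (R : realType) (ord : rel (seq 'rV[int]_d))
  (t : Edge d -> R) (x : 'rV[int]_d) (s : seq 'rV[int]_d) : Prop :=
  geodesic t 0 x s /\ forall s', geodesic t 0 x s' -> ord s s'.

(* pi^(x); arbitrary ([::]) on the (null) event that it does not exist *)
Definition pi_x (d : nat) (R : realType) (ord : rel (seq 'rV[int]_d))
  (t : Edge d -> R) (x : 'rV[int]_d) : seq 'rV[int]_d :=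
  xget [::] [set s | first_geodesic ord t x s].

Definition nu_x (d : nat) (R : realType) (ord : rel (seq 'rV[int]_d))
  (t : Edge d -> R) (x : 'rV[int]_d) (B : set R) : R :=
  let es := path_edges (pi_x ord t x) in
  (count (fun e => `[< B (t e) >]) es)%:R / (size es)%:R.

Definition iid_law (d : nat) (R : realType) (dd : measure_display)
  (Omega : measurableType dd) (P : probability Omega R)
  (tau : Edge d -> Omega -> R) (mu : probability R R) : Prop :=
  (forall e, measurable_fun setT (tau e)) /\
  forall (S : seq (Edge d)) (B : Edge d -> set R), uniq S ->
    (forall e, measurable (B e)) ->
    P (\bigcap_(e in [set` S]) (tau e @^-1` B e)) = (\prod_(e <- S) mu (B e))%E.

Definition bernoulli_family (d : nat) (R : realType) (dd : measure_display)
  (Omega : measurableType dd) (P : probability Omega R)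
  (p : R) (om : Edge d -> Omega -> bool) : Prop :=
  (forall e, measurable [set w | om e w]) /\
  forall (S : seq (Edge d)) (b : Edge d -> bool), uniq S ->
    P (\bigcap_(e in [set` S]) [set w | om e w = b e]) =
    (\prod_(e <- S) (if b e then p else 1 - p))%:E.

Definition open_cluster (d : nat) (open : Edge d -> bool) : set 'rV[int]_d :=
  [set y | exists s, sa_path 0 y s /\ all open (path_edges s)].

Definition oriented_step (d : nat) (open : Edge d -> bool) (u v : 'rV[int]_d) : bool :=
  [exists i : 'I_d, (v == u + unit_vec i) && open (u, i)].

Definition oriented_cluster (d : nat) (open : Edge d -> bool) : set 'rV[int]_d :=
  [set y | exists s, head 0 s = 0 /\ s != [::] /\ last 0 s = y /\
     all (fun p => oriented_step open p.1 p.2) (zip s (behead s))].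

(* theta(p) = 0 : no percolation at parameter p (law-determined, so stated
   for every probability space carrying an i.i.d. Bernoulli(p) family) *)
Definition no_percolation (d : nat) (R : realType) (p : R) : Prop :=
  forall (dd : measure_display) (Omega : measurableType dd)
    (P : probability Omega R) (om : Edge d -> Omega -> bool),
  bernoulli_family P p om ->
  P [set w | ~ finite_set (open_cluster (fun e => om e w))] = 0%E.

Definition no_oriented_percolation (d : nat) (R : realType) (p : R) : Prop :=
  forall (dd : measure_display) (Omega : measurableType dd)
    (P : probability Omega R) (om : Edge d -> Omega -> bool),
  bernoulli_family P p om ->
  P [set w | ~ finite_set (oriented_cluster (fun e => om e w))] = 0%E.

Definition p_c (R : realType) (d : nat) : R :=
  sup [set p : R | 0 <= p <= 1 /\ no_percolation d p].

Definition vec_p_c (R : realType) (d : nat) : R :=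
  sup [set p : R | 0 <= p <= 1 /\ no_oriented_percolation d p].

Definition distF (R : realType) (mu : probability R R) (t : R) : R :=
  fine (mu [set` `]-oo, t]]).

Definition ess_infimum (R : realType) (mu : probability R R) : R :=
  inf [set t : R | 0 < distF mu t].

(* Main.v *)
Require Import Defs.
From HB Require Import structures.
From mathcomp Require Import all_boot all_order all_algebra.
From mathcomp Require Import all_classical all_reals all_analysis.
Import Order.TTheory GRing.Theory Num.Theory.
Local Open Scope classical_set_scope.
Local Open Scope ring_scope.
From mathcomp Require Import lra measurable_realfun.
Set Implicit Arguments. Unset Strict Implicit. Unset Printing Implicit Defensive.

Lemma mem_zip2 (T1 T2 : eqType) (s : seq T1) (t : seq T2) x y :
  (x, y) \in zip s t -> x \in s /\ y \in t.
Proof.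
elim: s t => [|a s IH] [|c t] //= ; rewrite inE => /orP [/eqP [-> ->]|/IH [h1 h2]].
  by rewrite !inE !eqxx.
by rewrite !inE h1 h2 !orbT.
Qed.

Lemma edge_of_spec d (u v a : 'rV[int]_d) i : edge_of u v = Some (a, i) ->
  (u = a /\ v = a + unit_vec i) \/ (v = a /\ u = a + unit_vec i).
Proof.
rewrite /edge_of; case: pickP => [j /eqP Hj [<- <-]|_]; first by left.
by case: pickP => [j /eqP Hj [<- <-]|_] //; right.
Qed.

Lemma mem_path_edges d (t : seq 'rV[int]_d) f : f \in path_edges t ->
  exists p q, [/\ p \in t, q \in t & edge_of p q = Some f].
Proof.
rewrite /path_edges mem_pmap => /mapP [[p q] /mem_zip2 [hp hq] /= hf].
by exists p, q; split => //; apply: mem_behead.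
Qed.

Lemma uniq_path_edges d (t : seq 'rV[int]_d) : uniq t -> uniq (path_edges t).
Proof.
elim: t => [|u t IH] //=; case: t IH => [|v t] IH //= /andP [hu hut].
move: (IH hut); rewrite /path_edges /=.
case E: (edge_of u v) => [[a i]|] //= -> ; rewrite andbT.
apply/negP => /mem_path_edges [p [q [hp hq]]].
move=> E2.
case: (edge_of_spec E) => [[h1 h2]|[h1 h2]]; case: (edge_of_spec E2) => [[h3 h4]|[h3 h4]].
- by move: hu; rewrite h1 -h3 hp.
- by move: hu; rewrite h1 -h3 hq.
- by move: hu; rewrite h2 -h4 hq.
- by move: hu; rewrite h2 -h4 hp.
Qed.

Lemma pt_mod d (R : realType) (t t' : Edge d -> R) e s :
  (forall f, f != e -> t' f = t f) ->
  passage_time t' s = passage_time t s + (t' e - t e) * (count_mem e (path_edges s))%:R.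
Proof.
move=> h; rewrite /passage_time; elim: (path_edges s) => [|f es IH].
  by rewrite !big_nil mulr0 addr0.
rewrite !big_cons IH /=; case: (eqVneq f e) => [->|fe].
  rewrite /= add1n mulrS mulrDr; lra.
by rewrite h // add0n; lra.
Qed.

Lemma sa_count_le1 d (u v : 'rV[int]_d) s e : sa_path u v s ->
  (count_mem e (path_edges s) <= 1)%N.
Proof.
case=> _ _ _ _ hu; rewrite count_uniq_mem ?uniq_path_edges //.
by case: (e \in _).
Qed.

Lemma first_geo_uniq d (R : realType) (ord : rel (seq 'rV[int]_d)) t x s1 s2 :
  path_ordering ord -> @first_geodesic d R ord t x s1 ->
  first_geodesic ord t x s2 -> s1 = s2.
Proof.
case=> _ _ ha [g1 h1] [g2 h2]; apply: ha; rewrite h1 // h2 //.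
Qed.

Lemma pi_x_eq d (R : realType) (ord : rel (seq 'rV[int]_d)) t x s :
  path_ordering ord -> @first_geodesic d R ord t x s -> pi_x ord t x = s.
Proof.
move=> po hs; apply: xget_unique => // y hy; exact: first_geo_uniq po hy hs.
Qed.

Lemma pi_x_none d (R : realType) (ord : rel (seq 'rV[int]_d)) t x :
  (forall s, ~ @first_geodesic d R ord t x s) -> pi_x ord t x = [::].
Proof. by move=> h; apply: xgetPN. Qed.

Lemma first_geo_lower d (R : realType) (ord : rel (seq 'rV[int]_d)) (t t' : Edge d -> R) e x s :
  (forall f, f != e -> t' f = t f) -> t' e <= t e -> e \in path_edges s ->
  first_geodesic ord t x s -> first_geodesic ord t' x s.
Proof.
move=> ht hle he [[sas hgeo] hfirst].
have ks : count_mem e (path_edges s) = 1%N.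
  by case: (sas) => _ _ _ _ hu; rewrite count_uniq_mem ?uniq_path_edges // he.
have Tk p : sa_path 0 x p -> exists2 k : R, (k = 0 \/ k = 1) &
    passage_time t' p = passage_time t p + (t' e - t e) * k.
  move=> /(sa_count_le1 e); rewrite (@pt_mod _ _ t t' e p ht).
  case: (count_mem e _) => [|[|//]] _; [exists 0; [left|] | exists 1; [right|]] => //.
have Ts : passage_time t' s = passage_time t s + (t' e - t e).
  by rewrite (@pt_mod _ _ t t' e s ht) ks mulr1.
have geo' : geodesic t' 0 x s.
  split=> // s' sas'; case: (Tk _ sas') => k hk ->; rewrite Ts.
  have := hgeo _ sas'; case: hk => ->; lra.
split=> // s' [sas' hgeo']; apply: hfirst; split=> // s'' sas''.
have h1 := hgeo' _ sas; have h2 := hgeo _ sas''.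
case: (Tk _ sas') => k hk Ek; rewrite Ek Ts in h1.
case: hk => Ek'; rewrite Ek' in h1; lra.
Qed.


Section meas.
Context (dd : measure_display) (T : measurableType dd) (R : realType) (d : nat).
Variable (Y : Edge d -> T -> R).
Hypothesis mY : forall e, measurable_fun setT (Y e).

Lemma bigcap_count (I : countType) (F : I -> set T) :
  (forall i, measurable (F i)) -> measurable [set w | forall i, F i w].
Proof.
move=> mF.
have -> : [set w | forall i, F i w] =
   \bigcap_n (match @pickle_inv I n with Some i => F i | None => setT end).
  apply/seteqP; split => w h.
    by move=> n _ /=; case: (pickle_inv n).
  by move=> i; have := h (pickle i) Logic.I; rewrite pickleK_inv.
by apply: bigcapT_measurable => n; case: (pickle_inv n).
Qed.

Lemma m_pt p : measurable_fun setT (fun w => passage_time (fun e => Y e w) p).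
Proof. by rewrite /passage_time; apply: measurable_sum. Qed.

Lemma m_le p q : measurable [set w | passage_time (fun e => Y e w) p <=
                                     passage_time (fun e => Y e w) q].
Proof.
by rewrite -[X in measurable X]setTI; apply: measurable_fun_le => //; apply: m_pt.
Qed.

Lemma m_geo x s : measurable [set w | geodesic (fun e => Y e w) 0 x s].
Proof.
case: (pselect (sa_path 0 x s)) => hs; last first.
  by rewrite (_ : [set w | _] = set0) //; apply/seteqP; split => w // [].
rewrite (_ : [set w | _] = [set w | forall s', (fun s' =>
    if pselect (sa_path 0 x s') is left _ then
    [set w | passage_time (fun e => Y e w) s <= passage_time (fun e => Y e w) s']
    else setT) s' w]).
  apply: bigcap_count => s' /=; case: pselect => _; first [exact (m_le s s') | exact measurableT].
apply/seteqP; split => w /=.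
  by case=> _ h s'; case: pselect => // /h.
by move=> h; split => // s' hs'; have := h s'; case: pselect.
Qed.

Lemma m_first (ord : rel (seq 'rV[int]_d)) x s :
  measurable [set w | first_geodesic ord (fun e => Y e w) x s].
Proof.
rewrite (_ : [set w | _] = [set w | geodesic (fun e => Y e w) 0 x s] `&`
   [set w | forall s', (fun s' => if ord s s' then setT else
        ~` [set w | geodesic (fun e => Y e w) 0 x s']) s' w]).
  apply: measurableI; first exact: m_geo.
  apply: bigcap_count => s' /=; case: (ord s s');
    first [exact measurableT | exact (measurableC (m_geo x s'))].
apply/seteqP; split => w /=.
  case=> h1 h2; split => // s'; case E: (ord s s') => // /h2.
  by rewrite E.
case=> h1 h2; split => // s' hs'; have := h2 s'.
by case: (ord s s') => // /(_ hs').
Qed.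

End meas.


Section indep.
Local Open Scope ereal_scope.
Context (dd : measure_display) (Omega : measurableType dd) (R : realType) (d : nat).
Variables (P : probability Omega R) (tau : Edge d -> Omega -> R) (mu : probability R R).
Hypothesis hiid : iid_law P tau mu.

Definition Pi (e : Edge d) : set (set Omega) :=
  [set A | exists S (B : Edge d -> set R), [/\ uniq S, e \notin S,
     (forall f, measurable (B f)) & A = \bigcap_(f in [set` S]) (tau f @^-1` B f)]].

Lemma mpre f B : measurable B -> measurable (tau f @^-1` B).
Proof. by move=> mB; rewrite -[X in measurable X]setTI; apply: hiid.1. Qed.

Lemma bigcap_seq_meas (S : seq (Edge d)) (B : Edge d -> set R) :
  (forall f, measurable (B f)) ->
  measurable (\bigcap_(f in [set` S]) (tau f @^-1` B f)).
Proof.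
move=> mB.
rewrite (_ : \bigcap_(f in _) _ = [set w | forall f, (fun f =>
    if f \in S then tau f @^-1` B f else setT) f w]).
  apply: (bigcap_count (F := fun f => if f \in S then tau f @^-1` B f else setT)).
  by move=> f /=; case: (f \in S) => //; apply: mpre.
apply/seteqP; split => w /= h f.
  by case: ifP => // fS; apply: h.
by move=> fS; have := h f; rewrite fS.
Qed.

Lemma Pi_meas e A : Pi e A -> measurable A.
Proof. by case=> S [B [_ _ mB ->]]; apply: bigcap_seq_meas. Qed.

Lemma Pi_setT e : Pi e setT.
Proof.
exists [::], (fun _ => setT); split => //.
by apply/seteqP; split => w //= _ f.
Qed.

Lemma Pi_setI e : setI_closed (Pi e).
Proof.
move=> A1 A2 [S1 [B1 [u1 e1 m1 ->]]] [S2 [B2 [u2 e2 m2 ->]]].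
exists (undup (S1 ++ S2)), (fun f => (if f \in S1 then B1 f else setT) `&`
                                     (if f \in S2 then B2 f else setT)).
split.
- exact: undup_uniq.
- by rewrite mem_undup mem_cat negb_or e1 e2.
- by move=> f; apply: measurableI; case: ifP.
apply/seteqP; split => w /=.
  move=> [h1 h2] f /=; rewrite mem_undup mem_cat => /orP [fS|fS].
    split; first by rewrite fS; apply: h1.
    by case: ifP => // f2; apply: h2.
  split; last by rewrite fS; apply: h2.
  by case: ifP => // f1; apply: h1.
move=> h; split => f /= fS.
  have hf : f \in undup (S1 ++ S2) by rewrite mem_undup mem_cat fS.
  by case: (h f hf); rewrite fS.
have hf : f \in undup (S1 ++ S2) by rewrite mem_undup mem_cat fS orbT.
by case: (h f hf); rewrite fS.
Qed.

Lemma P_pre (e : Edge d) (B : set R) : measurable B -> P (tau e @^-1` B) = mu B.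
Proof.
move=> mB; have := hiid.2 [:: e] (fun _ => B) isT (fun _ => mB).
rewrite big_seq1 => <-; congr (P _).
apply/seteqP; split => w /=.
  by move=> h f /=; rewrite inE => /eqP ->.
by move=> h; apply: h; rewrite /= inE.
Qed.

Lemma Pi_indep e A B : Pi e A -> measurable B ->
  P (A `&` tau e @^-1` B) = mu B * P A.
Proof.
move=> [S [BS [uS eS mBS ->]]] mB.
pose B' := fun f => if f == e then B else BS f.
have mB' f : measurable (B' f) by rewrite /B'; case: ifP.
have hu : uniq (e :: S) by rewrite /= eS uS.
have := hiid.2 (e :: S) B' hu mB'.
rewrite big_cons => H.
have E1 : mu (B' e) = mu B by rewrite /B' eqxx.
have E2 : \prod_(j <- S) mu (B' j) = \prod_(j <- S) mu (BS j).
  by apply: eq_big_seq => f fS; rewrite /B'; case: eqP => // fe; move: eS; rewrite -fe fS.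
rewrite (hiid.2 S BS uS mBS) -E1 -E2 -H; congr (P _).
apply/seteqP; split => w /=.
  move=> [h1 h2] f /=; rewrite inE => /orP [/eqP ->|fS]; first by rewrite /B' eqxx.
  by rewrite /B'; case: eqP => [->//|_]; apply: h1.
move=> h; split.
  move=> f fS; have := h f; rewrite /= inE fS orbT /B' => /(_ isT).
  by case: eqP => // fe; move: eS; rewrite -fe fS.
by have := h e; rewrite /= inE eqxx /B' eqxx => /(_ isT).
Qed.

Lemma indep_sigma e A B : <<s Pi e >> A -> measurable B ->
  P (A `&` tau e @^-1` B) = mu B * P A.
Proof.
move=> hA mB.
have mC : measurable (tau e @^-1` B) by apply: mpre.
have mu0 : (0 <= fine (mu B))%R by apply: fine_ge0.
pose r : {nonneg R} := NngNum mu0.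
have fmu : mu B = (fine (mu B))%:E.
  by rewrite fineK // ge0_fin_numE ?(le_lt_trans (probability_le1 _ mB)) ?ltey.
have key : forall E, <<s Pi e >> E ->
    P (E `&` tau e @^-1` B) = (fine (mu B))%:E * P E.
  move=> E hE.
  have := (@g_sigma_algebra_measure_unique dd R Omega (Pi e) (@Pi_meas e)
   (fun _ => setT) (fun _ => Pi_setT e) _ (mrestr P mC) (mscale r P) (@Pi_setI e)).
  have c1 : \bigcup_(_ : nat) [set: Omega] = [set: Omega].
    by apply/seteqP; split => // w _; exists 0%N.
  have c2 : forall A : set Omega, Pi e A -> mrestr P mC A = mscale r P A.
    by move=> A' hA'; rewrite /= /mrestr /mscale /= Pi_indep // -fmu.
  have c3 : nat -> mrestr P mC [set: Omega] < +oo.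
    by move=> _; rewrite /= /mrestr setTI (le_lt_trans (probability_le1 _ mC)) ?ltey.
  by move=> /(_ c1 c2 c3 E hE).
by rewrite key // -fmu.
Qed.

End indep.


Lemma series_single (R : realType) (f : nat -> \bar R) k :
  (forall n, (0 <= f n)%E) -> (forall n, n != k -> f n = 0%E) ->
  (\sum_(n <oo) f n = f k)%E.
Proof.
move=> f0 fk; rewrite (@nneseries_split _ _ 0 k.+1) // add0n.
rewrite eseries0; last by move=> i ki _; apply: fk; rewrite neq_ltn ki orbT.
rewrite adde0 big_nat_recr //= big1_seq ?add0e // => i /andP [_].
by rewrite mem_index_iota => /andP [_ ik]; apply: fk; rewrite neq_ltn ik.
Qed.

Lemma series_zero (R : realType) (f : nat -> \bar R) :
  (forall n, f n = 0%E) -> (\sum_(n <oo) f n = 0)%E.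
Proof. by move=> h; apply: eseries0 => i _ _; apply: h. Qed.

Lemma sum_count (R : realType) (T : eqType) (p : pred T) (s : seq T) :
  \sum_(e <- s) ((p e)%:R : R) = (count p s)%:R.
Proof.
elim: s => [|a s IH]; first by rewrite big_nil.
by rewrite big_cons IH /= natrD.
Qed.

Section main.
Local Open Scope ereal_scope.
Context (R : realType) (d : nat) (mu : probability R R).
Context (dd : measure_display) (Omega : measurableType dd) (P : probability Omega R).
Variables (tau : Edge d -> Omega -> R) (ord : rel (seq 'rV[int]_d)) (x : 'rV[int]_d).
Hypothesis hiid : iid_law P tau mu.
Hypothesis hpo : path_ordering ord.

Definition Es s := [set w | first_geodesic ord (fun e => tau e w) x s].

Definition Fn (B : set R) (n : nat) (w : Omega) : \bar R :=
  match @pickle_inv (seq 'rV[int]_d) n with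
  | Some s => \sum_(e <- path_edges s)
       (((size (path_edges s))%:R^-1 * \1_(Es s `&` tau e @^-1` B) w)%:E)
  | None => 0 end.

Lemma Fn_ge0 B n w : 0 <= Fn B n w.
Proof.
rewrite /Fn; case: pickle_inv => // s; apply: sume_ge0 => e _.
by rewrite lee_fin mulr_ge0 // invr_ge0.
Qed.

Lemma Fn_meas B n : measurable B -> measurable_fun setT (Fn B n).
Proof.
move=> mB; rewrite /Fn; case: pickle_inv => [s|]; last exact: measurable_cst.
apply: emeasurable_sum => e; apply/measurable_EFinP.
apply: measurable_funM; first exact: measurable_cst.
apply: measurable_indic; apply: measurableI.
  exact: (m_first (Y := tau) hiid.1).
exact: (mpre hiid).
Qed.

Lemma nu_series B w :
  (nu_x ord (fun e => tau e w) x B)%:E = \sum_(n <oo) Fn B n w.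
Proof.
case: (pselect (exists s, Es s w)) => [[s0 hs0]|hno].
  rewrite (@series_single _ _ (pickle s0)); last 2 first.
  - by move=> n; apply: Fn_ge0.
  - move=> n hn; rewrite /Fn; case E: pickle_inv => [s|//].
    rewrite big1 // => e _; rewrite indicE.
    suff -> : (w \in Es s `&` tau e @^-1` B) = false by rewrite mulr0.
    have hn' := @pickle_invK (seq 'rV[int]_d) n; rewrite E /= in hn'.
    apply/negP => /set_mem [hs _]; move: hn; rewrite -hn'.
    by rewrite (first_geo_uniq hpo hs hs0) eqxx.
  rewrite /Fn pickleK_inv /nu_x (pi_x_eq hpo hs0) sumEFin; congr EFin.
  rewrite -big_distrr /= mulrC -sum_count; congr (_ * _)%R.
  apply: eq_bigr => e _; rewrite indicE; congr (_%:R); congr (nat_of_bool _).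
  case: asboolP => h.
    by symmetry; apply: mem_set; split.
  by symmetry; apply/negP => /set_mem [_ h'].
rewrite series_zero; last first.
  move=> n; rewrite /Fn; case: pickle_inv => [s|//].
  rewrite big1 // => e _; rewrite indicE.
  suff -> : (w \in Es s `&` tau e @^-1` B) = false by rewrite mulr0.
  by apply/negP => /set_mem [hs _]; apply: hno; exists s.
rewrite /nu_x pi_x_none /=; first by rewrite mul0r.
by move=> s hs; apply: hno; exists s.
Qed.


Lemma E_nu B : measurable B ->
  'E_P[fun w => nu_x ord (fun e => tau e w) x B] = \sum_(n <oo) \int[P]_w Fn B n w.
Proof.
move=> mB; rewrite unlock.
rewrite (eq_integral (fun w => \sum_(n <oo) Fn B n w)); last first.
  by move=> w _; rewrite nu_series.
apply: integral_nneseries => //.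
  by move=> n; apply: Fn_meas.
by move=> n w _; apply: Fn_ge0.
Qed.

Definition aB (B : set R) (s : seq 'rV[int]_d) : \bar R :=
  \sum_(e <- path_edges s) ((size (path_edges s))%:R^-1)%:E * P (Es s `&` tau e @^-1` B).

Lemma int_Fn B n : measurable B -> \int[P]_w Fn B n w =
  match @pickle_inv (seq 'rV[int]_d) n with Some s => aB B s | None => 0 end.
Proof.
move=> mB; rewrite /Fn /aB; case: pickle_inv => [s|]; last exact: integral0.
have mA e : measurable (Es s `&` tau e @^-1` B).
  by apply: measurableI; [exact: (m_first (Y := tau) hiid.1)|exact: (mpre hiid)].
rewrite ge0_integral_sum //; first last.
  move=> e; apply/measurable_EFinP; apply: measurable_funM; first exact: measurable_cst.
  exact: measurable_indic.
apply: eq_bigr => e _.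
under eq_integral do rewrite EFinM.
rewrite ge0_integralZl_EFin //.
- by rewrite integral_indic ?setIT.
- by apply/measurable_EFinP; apply: measurable_indic.
Qed.

Lemma E_nu_le1 B : measurable B ->
  'E_P[fun w => nu_x ord (fun e => tau e w) x B] <= 1.
Proof.
move=> mB; rewrite unlock.
apply: (@le_trans _ _ (\int[P]_w (cst 1 w))); last first.
  by rewrite integral_cst // mul1e; apply: probability_le1.
apply: ge0_le_integral => //.
- by move=> w _; rewrite lee_fin /nu_x divr_ge0.
- rewrite (_ : (fun w => _) = fun w => \sum_(n <oo) Fn B n w); last first.
    by apply/funext => w; rewrite nu_series.
  apply: ge0_emeasurable_sum => //.
  + by move=> k w _ _; apply: Fn_ge0.
  + by move=> k _; apply: Fn_meas.
move=> w _; rewrite lee_fin /nu_x.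
set n := size _; set k := count _ _.
have kn : (k <= n)%N by apply: count_size.
case: (posnP n) => [->|n0]; first by rewrite invr0 mulr0.
by rewrite ler_pdivrMr ?ltr0n // mul1r ler_nat.
Qed.


Definition Ec (c : R) s e :=
  [set w | first_geodesic ord (fun f => if f == e then c else tau f w) x s].

Lemma Ec_sigma c s e : <<s Pi tau e >> (Ec c s e).
Proof.
pose Y := fun f => if f == e then (fun _ : g_sigma_algebraType (Pi tau e) => c)
                   else (tau f : g_sigma_algebraType (Pi tau e) -> R).
have mY : forall f, measurable_fun setT (Y f).
  move=> f; rewrite /Y; case: eqP => [_|fe]; first exact: measurable_cst.
  move=> _ B' mB'; rewrite setTI; apply: sub_sigma_algebra.
  exists [:: f], (fun _ => B'); split => //.
    by rewrite inE; apply/eqP => ef; apply: fe.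
  apply/seteqP; split => w /=.
    by move=> h g /=; rewrite inE => /eqP ->.
  by move=> h; apply: h; rewrite /= inE.
have := m_first mY ord x s.
suff -> : [set w | first_geodesic ord (fun f => Y f w) x s] = Ec c s e by [].
apply/seteqP; split => w; rewrite /Ec /=;
  rewrite (_ : (fun f => Y f w) = fun f => if f == e then c else tau f w) //;
  by apply/funext => f; rewrite /Y; case: eqP.
Qed.

Lemma Ec_meas c s e : measurable (Ec c s e).
Proof.
pose Y := fun f => if f == e then (fun _ : Omega => c) else tau f.
have mY : forall f, measurable_fun setT (Y f).
  by move=> f; rewrite /Y; case: eqP => _; [exact: measurable_cst|exact: hiid.1].
have := m_first mY ord x s.
suff -> : [set w | first_geodesic ord (fun f => Y f w) x s] = Ec c s e by [].
apply/seteqP; split => w; rewrite /Ec /=;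
  rewrite (_ : (fun f => Y f w) = fun f => if f == e then c else tau f w) //;
  by apply/funext => f; rewrite /Y; case: eqP.
Qed.

Lemma Es_meas s : measurable (Es s).
Proof. exact: (m_first (Y := tau) hiid.1). Qed.

Lemma sub_up c (B : set R) s e : (forall y, B y -> c <= y)%R ->
  e \in path_edges s ->
  Es s `&` tau e @^-1` B `<=` Ec c s e `&` tau e @^-1` B.
Proof.
move=> hB he w [hs hb]; split => //.
apply: (@first_geo_lower _ _ ord (fun f => tau f w) _ e x s) hs => //.
- by move=> f fe; rewrite (negbTE fe).
- by rewrite eqxx; apply: hB.
Qed.

Lemma sub_down c (B : set R) s e : (forall y, B y -> y <= c)%R ->
  e \in path_edges s ->
  Ec c s e `&` tau e @^-1` B `<=` Es s `&` tau e @^-1` B.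
Proof.
move=> hB he w [hs hb]; split => //.
apply: (@first_geo_lower _ _ ord _ (fun f => tau f w) e x s) hs => //.
- by move=> f fe; rewrite (negbTE fe).
- by rewrite eqxx; apply: hB.
Qed.

Definition Xs c s := \sum_(e <- path_edges s)
  ((size (path_edges s))%:R^-1)%:E * P (Ec c s e).

Lemma Xs_ge0 c s : 0 <= Xs c s.
Proof.
apply: sume_ge0 => e _; apply: mule_ge0; first by rewrite lee_fin invr_ge0.
exact: measure_ge0.
Qed.

Lemma aB_up (c : R) (B : set R) s : measurable B -> (forall y, B y -> c <= y)%R ->
  aB B s <= mu B * Xs c s.
Proof.
move=> mB hB; rewrite /aB /Xs ge0_sume_distrr; last first.
  move=> e _; apply: mule_ge0; first by rewrite lee_fin invr_ge0.
  exact: measure_ge0.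
rewrite big_seq [X in _ <= X]big_seq; apply: lee_sum => e he.
rewrite muleCA -(indep_sigma hiid (@Ec_sigma c s e) mB).
apply: lee_wpmul2l; first by rewrite lee_fin invr_ge0.
apply: le_measure; rewrite ?inE.
- by apply: measurableI; [exact: Es_meas|exact: (mpre hiid)].
- by apply: measurableI; [exact: Ec_meas|exact: (mpre hiid)].
exact: sub_up.
Qed.

Lemma aB_down (c : R) (B : set R) s : measurable B -> (forall y, B y -> y <= c)%R ->
  mu B * Xs c s <= aB B s.
Proof.
move=> mB hB; rewrite /aB /Xs ge0_sume_distrr; last first.
  move=> e _; apply: mule_ge0; first by rewrite lee_fin invr_ge0.
  exact: measure_ge0.
rewrite big_seq [X in _ <= X]big_seq; apply: lee_sum => e he.
rewrite muleCA -(indep_sigma hiid (@Ec_sigma c s e) mB).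
apply: lee_wpmul2l; first by rewrite lee_fin invr_ge0.
apply: le_measure; rewrite ?inE.
- by apply: measurableI; [exact: Ec_meas|exact: (mpre hiid)].
- by apply: measurableI; [exact: Es_meas|exact: (mpre hiid)].
exact: sub_down.
Qed.

Lemma fmuE (B : set R) : measurable B -> mu B = (fine (mu B))%:E.
Proof.
move=> mB; rewrite fineK // ge0_fin_numE ?(le_lt_trans (probability_le1 _ mB)) ?ltey //.
Qed.

Lemma final (c : R) (B1 B2 : set R) : measurable B1 -> measurable B2 ->
  (forall y, B1 y -> c <= y)%R -> (forall y, B2 y -> y <= c)%R -> 0 < mu B2 ->
  'E_P[fun w => nu_x ord (fun e => tau e w) x B1] <= (fine (mu B2))^-1%:E * mu B1.
Proof.
move=> mB1 mB2 h1 h2 pos2.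
pose X n := match @pickle_inv (seq 'rV[int]_d) n with Some s => Xs c s | None => 0 end.
have X0 n : 0 <= X n by rewrite /X; case: pickle_inv => // s; apply: Xs_ge0.
have H1 : 'E_P[fun w => nu_x ord (fun e => tau e w) x B1] <= mu B1 * \sum_(n <oo) X n.
  rewrite E_nu // (fmuE mB1) -nneseriesZl //; apply: lee_nneseries.
    by move=> n _ _; apply: integral_ge0 => w _; apply: Fn_ge0.
  move=> n _; rewrite int_Fn // -(fmuE mB1) /X; case: pickle_inv => [s|].
    exact: aB_up.
  by rewrite mule0.
have H2 : mu B2 * \sum_(n <oo) X n <= 1.
  apply: le_trans (E_nu_le1 mB2); rewrite E_nu // (fmuE mB2) -nneseriesZl //.
  apply: lee_nneseries.
    by move=> n _ _; rewrite -(fmuE mB2); apply: mule_ge0 => //; exact: measure_ge0.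
  move=> n _; rewrite int_Fn // -(fmuE mB2) /X; case: pickle_inv => [s|].
    exact: aB_down.
  by rewrite mule0.
set S := \sum_(n <oo) X n in H1 H2.
have S0 : 0 <= S by apply: nneseries_ge0 => n _ _.
set m := fine (mu B2).
have m0 : (0 < m)%R by rewrite /m -lte_fin -fmuE.
rewrite (fmuE mB2) -/m in H2.
have HS' : forall S', 0 <= S' -> m%:E * S' <= 1 -> S' <= m^-1%:E.
  case=> [v| |] //.
    by rewrite -EFinM !lee_fin => _ H; rewrite -(ler_pM2l m0) mulfV // gt_eqF.
  by move=> _; rewrite gt0_muley ?lte_fin.
have HS := HS' S S0 H2.
apply: le_trans H1 _; rewrite muleC; apply: lee_wpmul2r => //.
Qed.

End main.

Unset Implicit Arguments. Set Strict Implicit.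

Theorem proposition2p7 (R : realType) (d : nat) (mu : probability R R) (b : R) :
  (2 <= d)%N ->
  mu [set` `]-oo, 0[] = 0%E ->
  (ess_infimum mu = 0 -> distF mu (ess_infimum mu) < p_c R d) ->
  (0 < ess_infimum mu -> distF mu (ess_infimum mu) < vec_p_c R d) ->
  ess_infimum mu < b ->
  (0 < mu [set` `]ess_infimum mu, b]])%E ->
  exists (C : R) (N : nat), 0 < C /\
    forall (dd : measure_display) (Omega : measurableType dd)
      (P : probability Omega R) (tau : Edge d -> Omega -> R)
      (ord : rel (seq 'rV[int]_d)),
    iid_law P tau mu ->
    (forall e w, 0 <= tau e w) ->
    path_ordering ord ->
    forall (c h : R) (x : 'rV[int]_d),
    b <= c -> (N <= l1 x)%N ->
    ('E_P[fun w => nu_x ord (fun e => tau e w) x [set` `]c, h]]] <=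
       C%:E * mu [set` `]c, h]])%E.
Proof.
move=> _ _ _ _ hrb hpos.
set r := ess_infimum mu in hrb hpos *.
have mI : measurable [set` `]r, b]] by apply: measurable_itv.
have m0 : 0 < fine (mu [set` `]r, b]]).
  apply: (@fine_gt0 R _); apply/andP; split => //.
  by rewrite (le_lt_trans (probability_le1 _ mI)) ?ltey.
exists (fine (mu [set` `]r, b]]))^-1, 0%N; split; first by rewrite invr_gt0.
move=> dd Omega P tau ord hiid _ hpo c h x hbc _.
apply: (final x hiid hpo (c := c)) => //.
- by move=> y; rewrite /= in_itv /= => /andP [cy _]; apply: ltW.
- by move=> y; rewrite /= in_itv /= => /andP [_ yb]; apply: le_trans hbc.
Qed.
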